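(* Let $n\ge 2$ and let $A\in\mathrm{GL}(n,2)$ be arbitrary, with columns $\mathbf{a}_1,\dots,\mathbf{a}_n\in\mathbb{F}_2^n$. Then there exist two probability distributions $p,q\in\Delta(\mathbb{F}_2^n)$ such that $\widehat p(\mathbf{a}_i)=\widehat q(\mathbf{a}_i)$ for all $i\in\{1,\dots,n\}$, but $p(\mathbf{0})\neq q(\mathbf{0})$.
   Context: $\mathbb{F}_2$ is the field with two elements; $\mathrm{GL}(n,2)$ is the group of invertible $n\times n$ matrices over $\mathbb{F}_2$. $\Delta(\mathbb{F}_2^n)$ denotes the set of probability distributions on $\mathbb{F}_2^n$. For $\mathbf{u},\mathbf{s}\in\mathbb{F}_2^n$, $\mathbf{u}\cdot\mathbf{s}=\sum_j u_js_j \pmod 2$. For $p\in\Delta(\mathbb{F}_2^n)$ the Walsh transform is $\widehat p(\mathbf{u})=\sum_{\mathbf{s}\in\mathbb{F}_2^n}(-1)^{\mathbf{u}\cdot\mathbf{s}}p(\mathbf{s})$. (Physical interpretation: $p$ is the syndrome distribution of a state relative to an $n$-qubit stabilizer state, $p(\mathbf{0})$ is the fidelity, and $\widehat p(\mathbf{a}_i)$ are the expectations of the generators in the gauge $A$.) *)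

(* Defs.v *)
From HB Require Import structures.
From mathcomp Require Import all_boot all_order all_algebra.
From mathcomp Require Import reals.
Set Implicit Arguments. Unset Strict Implicit. Unset Printing Implicit Defensive.
Import Order.TTheory GRing.Theory Num.Theory.
Local Open Scope ring_scope.

Definition dotF2 (n : nat) (u s : 'rV['F_2]_n) : 'F_2 :=
  \sum_(j < n) u 0 j * s 0 j.

Definition sgn_dot (R : realType) (n : nat) (u s : 'rV['F_2]_n) : R :=
  if dotF2 u s == 0 then 1 else -1.

Definition is_distribution (R : realType) (n : nat) (p : 'rV['F_2]_n -> R) : Prop :=
  (forall s, 0 <= p s) /\ \sum_(s : 'rV['F_2]_n) p s = 1.

Definition walsh (R : realType) (n : nat) (p : 'rV['F_2]_n -> R) (u : 'rV['F_2]_n) : R :=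
  \sum_(s : 'rV['F_2]_n) sgn_dot R u s * p s.

(* Main.v *)
Require Import Defs.
From HB Require Import structures.
From mathcomp Require Import all_boot all_order all_algebra.
From mathcomp Require Import reals.
Import Order.TTheory GRing.Theory Num.Theory.
Set Implicit Arguments. Unset Strict Implicit.
Local Open Scope ring_scope.

Lemma sum_delta (R : realType) (n : nat) (F : 'rV['F_2]_n -> R) t :
  \sum_s F s * (s == t)%:R = F t.
Proof.
rewrite (bigD1 t) //= eqxx mulr1 big1 ?addr0 // => s /negbTE ->.
by rewrite mulr0.
Qed.

Lemma sum_delta1 (R : realType) (n : nat) (t : 'rV['F_2]_n) :
  \sum_s (s == t)%:R = 1 :> R.
Proof.
rewrite (bigD1 t) //= eqxx big1 ?addr0 // => s /negbTE ->.
by [].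
Qed.

Lemma dotD (n : nat) (u a b : 'rV['F_2]_n) :
  dotF2 u (a + b) = dotF2 u a + dotF2 u b.
Proof.
rewrite /dotF2 -big_split /=; apply: eq_bigr => j _.
by rewrite mxE mulrDr.
Qed.

Lemma F2_case (x : 'F_2) : (1 + x == 0) = (x != 0).
Proof. by case: x => [[|[|k]] //]. Qed.

Definition dd (R : realType) (n : nat) (s1 t s : 'rV['F_2]_n) : R :=
  ((s == t)%:R + (s == s1 + t)%:R) / 2.

Lemma dd_dist (R : realType) (n : nat) (s1 t : 'rV['F_2]_n) :
  s1 != 0 -> is_distribution (@dd R n s1 t).
Proof.
move=> s10; split.
  by move=> s; rewrite /dd divr_ge0 ?addr_ge0 ?ler0n.
rewrite /dd -mulr_suml big_split /=.
rewrite !sum_delta1.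
by rewrite divff // lt0r_neq0 // addr_gt0 ?ltr01.
Qed.

Lemma dd_walsh (R : realType) (n : nat) (s1 t u : 'rV['F_2]_n) :
  dotF2 u s1 = 1 -> walsh (@dd R n s1 t) u = 0.
Proof.
move=> hu; rewrite /walsh /dd.
under eq_bigr do rewrite mulrA mulrDr.
rewrite -mulr_suml big_split /= !sum_delta.
rewrite /sgn_dot dotD hu F2_case.
by case: (dotF2 u t == 0); rewrite /= ?addrN ?mul0r // addrC subrr mul0r.
Qed.

Theorem proposition1 (R : realType) (n : nat) (hn : (2 <= n)%N)
  (A : 'M['F_2]_n) (hA : A \in unitmx) :
  exists p q : 'rV['F_2]_n -> R,
    [/\ is_distribution p, is_distribution q,
        (forall i : 'I_n, walsh p (col i A)^T = walsh q (col i A)^T)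
      & p 0 <> q 0].
Proof.
set s1 : 'rV['F_2]_n := const_mx 1 *m invmx A.
have hs1A : s1 *m A = const_mx 1 by rewrite mulmxKV.
pose i0 : 'I_n := Ordinal (leq_trans (isT : (0 < 2)%N) hn).
pose i1 : 'I_n := Ordinal (leq_trans (isT : (1 < 2)%N) hn).
have hdot : forall i : 'I_n, dotF2 (col i A)^T s1 = 1.
  move=> i; have := congr1 (fun M : 'rV['F_2]_n => M 0 i) hs1A; rewrite /= !mxE => <-.
  by rewrite /dotF2; apply: eq_bigr => j _; rewrite !mxE mulrC.
have s10 : s1 != 0.
  apply/eqP => h; move: hs1A; rewrite h mul0mx => /(congr1 (fun M : 'rV['F_2]_n => M 0 i0)).
  by rewrite !mxE.
pose e k : 'rV['F_2]_n := delta_mx 0 k.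
have e0 : forall k, e k != 0.
  by move=> k; apply/eqP => /(congr1 (fun M : 'rV['F_2]_n => M 0 k)); rewrite !mxE !eqxx.
have ne : e i0 != e i1.
  apply/eqP => /(congr1 (fun M : 'rV['F_2]_n => M 0 i0)); rewrite !mxE !eqxx.
  by rewrite (_ : (i0 == i1) = false).
have [t [ht0 ht1]] : exists t, t != 0 /\ s1 + t != 0.
  case: (eqVneq (s1 + e i0) 0) => h0.
    exists (e i1); split; first exact: e0.
    apply/eqP => h1; rewrite -h1 in h0.
    by move/addrI/eqP: h0; rewrite (negbTE ne).
  by exists (e i0); split; [exact: e0 | exact: h0].
exists (@dd R n s1 0), (@dd R n s1 t); split.
- exact: dd_dist.
- exact: dd_dist.
- by move=> i; rewrite !dd_walsh.
rewrite /dd eqxx addr0 (eq_sym 0 s1) (negbTE s10) (eq_sym 0 t) (negbTE ht0).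
rewrite (eq_sym 0 (s1 + t)) (negbTE ht1) addr0.
by rewrite /= addr0 mul0r mul1r; apply/eqP; rewrite invr_eq0 lt0r_neq0 // addr_gt0 ?ltr01.
Qed.
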